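(* Suppose sudoku flags $Z_1=(g_1,V_1)$ and $Z_2=(g_2,V_2)$, giving rise to orthogonal sudoku solutions with latin radix subsquares, possess data $(\Gamma _1, \beta _1)$ and $(\Gamma _2,\beta _2)$, respectively, with $\Gamma _i=\begin{pmatrix} a_i & b_i\\ c_i & d_i \end{pmatrix}$ for $i\in \{1,2\}$. Further, assume $\beta _1 - \beta _2$ and $b_1(d_2-\beta _2)-b_2(d_1-\beta _1)$ are nonzero. Then $$ g_{12}=V_1\cap V_2=\left[\begin{array}{c} I \\ \Gamma _{12} \end{array}\right], $$ where $\Gamma _{12}=\begin{pmatrix} a_{12} & b_{12} \\ c_{12} & d_{12} \end{pmatrix}$, and, with $D=b_1(d_2-\beta _2)-b_2(d_1-\beta _1)$, \begin{align*} a _{12}&=\frac{b_1b_2(c_1-c_2)+a_2b_1(d_2-\beta _2)-a_1b_2(d_1-\beta _1)}{D},\qquad b _{12}=\frac{b_1b_2(\beta _1-\beta _2)}{D},\\ c _{12}&=\frac{b_1c_1(d_2-\beta _2)-b_2c_2(d_1-\beta _1)+(a_2-a_1)(d_1-\beta _1)(d_2-\beta _2)}{D},\qquad d _{12}=\frac{\beta _1 b_1 (d_2-\beta _2)-\beta _2b_2(d_1-\beta _1)}{D}. \end{align*}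
   Context: Let $\mathbb F$ be the finite field of order $q$, with locations of order-$q^2$ sudoku solutions identified with $\mathbb F^4$ (coordinates: large row, row within large row, large column, column within large column). A sudoku flag is a pair $Z=(g,V)$ of subspaces of $\mathbb F^4$, $\dim g=2$, $\dim V=3$, $g\subset V$, with $g$ generating a linear sudoku solution (each symbol's locations form a coset of $g$; radix digits of symbols lie in cosets of $V$). Radix subsquares are the subsquares of the square of radix (base-$q$ leading) digits. It is known that such a flag gives a sudoku solution with latin radix subsquares iff $Z=(\langle (1,0,a,c),(0,1,b,d)\rangle,\langle (1,0,a,c),(0,1,b,d),(0,1,0,\beta)\rangle)$ with $b,\beta\neq0$ and $\Gamma=\begin{pmatrix} a&b\\c&d\end{pmatrix}$ nonsingular; $(\Gamma,\beta)$ is called the datum of $Z$. For $2\times 2$ matrices, $\left[\begin{array}{c} I\\ \Gamma\end{array}\right]$ denotes the subspace of $\mathbb F^4$ spanned by the columns of the $4\times 2$ matrix with $I$ (the $2\times 2$ identity) stacked above $\Gamma$. Two linear sudoku solutions generated by $g_1,g_2$ are orthogonal iff $g_1\cap g_2=\{0\}$. *)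

(* Defs.v *)
(* subspaces of F^4 are represented as row spaces of matrices
   (mxalgebra, scope %MS); vectors of F^4 are row vectors 'rV[F]_4. *)
From HB Require Import structures.
From mathcomp Require Import all_boot all_order all_algebra.
Set Implicit Arguments. Unset Strict Implicit. Unset Printing Implicit Defensive.
Import GRing.Theory.
Local Open Scope ring_scope.

Section SudokuDefs.
Variable F : fieldType.

Definition vec4 (x0 x1 x2 x3 : F) : 'rV[F]_4 :=
  \row_(j < 4) nth 0 [:: x0; x1; x2; x3] j.

Definition mx2 (a b c d : F) : 'M[F]_2 :=
  \matrix_(i < 2, j < 2)
     if (i : nat) == 0%N then (if (j : nat) == 0%N then a else b)
     else (if (j : nat) == 0%N then c else d).

(* [I ; G] : the subspace of F^4 spanned by the columns of the 4x2 matrix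
   with I stacked above G (as a row space: rows are those columns) *)
Definition stacked_span (G : 'M[F]_2) : 'M[F]_(2, 4) :=
  (col_mx (1%:M : 'M[F]_2) G)^T.

Definition flag_g (a b c d : F) : 'M[F]_(2, 4) :=
  col_mx (vec4 1 0 a c) (vec4 0 1 b d).

Definition flag_V (a b c d beta : F) : 'M[F]_(3, 4) :=
  col_mx (flag_g a b c d) (vec4 0 1 0 beta).

Definition has_datum (g V : 'M[F]_4) (a b c d beta : F) : Prop :=
  [/\ (g == flag_g a b c d)%MS, (V == flag_V a b c d beta)%MS,
      b != 0, beta != 0 & mx2 a b c d \in unitmx].

(* orthogonality of the linear sudoku solutions generated by g1, g2 *)
Definition orthogonal_g (g1 g2 : 'M[F]_4) : Prop := ((g1 :&: g2)%MS == (0 : 'M[F]_4)).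

End SudokuDefs.

(* Main.v *)
Require Import Defs.
From HB Require Import structures.
From mathcomp Require Import all_boot all_order all_algebra.
From mathcomp Require Import ring zify.
Import GRing.Theory.
Local Open Scope ring_scope.

Definition P4 (F : fieldType) : 'M[F]_(4,2) := \matrix_(i<4,j<2) ((i:nat) == j)%:R.

Lemma flag_gE (F : fieldType) (a b c d : F) : flag_g a b c d =
  \matrix_(i<2,j<4) nth 0 (if (i:nat) == 0%N then [::1;0;a;c] else [::0;1;b;d]) j.
Proof.
apply/matrixP => i j; rewrite !mxE; case: splitP => k Hk; rewrite !mxE ord1 in Hk *;
  by rewrite Hk.
Qed.

Lemma flag_VE (F : fieldType) (a b c d e : F) : flag_V a b c d e =
  \matrix_(i<3,j<4) nth 0 (if (i:nat) == 0%N then [::1;0;a;c] else if (i:nat) == 1%N then [::0;1;b;d] else [::0;1;0;e]) j.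
Proof.
apply/matrixP => i j; rewrite !mxE; case: splitP => k Hk; rewrite ?flag_gE !mxE ?ord1 in Hk *.
  by rewrite Hk; case: k {Hk} => [[|[|?]] ?].
by rewrite Hk.
Qed.

Lemma stackedE (F : fieldType) (a b c d : F) :
  stacked_span (mx2 a b c d) = flag_g a b c d.
Proof.
rewrite flag_gE; apply/matrixP => i j; rewrite !mxE; case: splitP => k Hk; rewrite !mxE.
  by case: i k Hk => [[|[|?]] ?] [[|[|?]] ?] //= ->.
by case: i k Hk => [[|[|?]] ?] [[|[|?]] ?] //= ->.
Qed.

Lemma gP (F : fieldType) (a b c d : F) : flag_g a b c d *m P4 F = 1%:M.
Proof.
rewrite flag_gE; apply/matrixP => i j; rewrite !mxE !big_ord_recr big_ord0 /= !mxE.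
by case: i => [[|[|i]] Hi] //; case: j => [[|[|j]] Hj] //=; simpl; rewrite ?mxE /=; ring.
Qed.

Lemma rank_g (F : fieldType) (a b c d : F) : (2 <= \rank (flag_g a b c d))%N.
Proof.
have := mxrankM_maxl (flag_g a b c d) (P4 F).
by rewrite gP mxrank1.
Qed.

Lemma g_sub_V (F : fieldType) (a b c d e : F) : (flag_g a b c d <= flag_V a b c d e)%MS.
Proof. by rewrite /flag_V; apply: (submx_trans (addsmxSl _ _)); rewrite addsmxE. Qed.

Lemma sub_lemma (F : fieldType) (x y z w a b c d e : F) :
  b != 0 ->
  z - c = (x - a) / b * (d - e) ->
  w - d = (y - b) / b * (d - e) ->
  (flag_g x y z w <= flag_V a b c d e)%MS.
Proof.
move=> bn0 H1 H2; apply/submxP.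
exists (\matrix_(i<2,j<3) nth 0 (if (i:nat) == 0%N then [::1;(x-a)/b;-((x-a)/b)]
          else [::0;1+(y-b)/b;-((y-b)/b)]) j).
rewrite flag_gE flag_VE; apply/matrixP => i j; rewrite !mxE !big_ord_recr big_ord0 /= !mxE.
case: i => [[|[|i]] Hi] //; case: j => [[|[|[|[|j]]]] Hj] //=; simpl; rewrite ?mxE /=;
  try ring.
- by field.
- by rewrite -[z](subrK c) H1; ring.
- by field.
- by rewrite -[w](subrK d) H2; ring.
Qed.

Theorem proposition4p8 (F : finFieldType) (g1 V1 g2 V2 : 'M[F]_4)
  (a1 b1 c1 d1 beta1 a2 b2 c2 d2 beta2 : F) :
  has_datum g1 V1 a1 b1 c1 d1 beta1 ->
  has_datum g2 V2 a2 b2 c2 d2 beta2 ->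
  orthogonal_g g1 g2 ->
  beta1 - beta2 != 0 ->
  b1 * (d2 - beta2) - b2 * (d1 - beta1) != 0 ->
  let D := b1 * (d2 - beta2) - b2 * (d1 - beta1) in
  let a12 := (b1 * b2 * (c1 - c2) + a2 * b1 * (d2 - beta2)
              - a1 * b2 * (d1 - beta1)) / D in
  let b12 := (b1 * b2 * (beta1 - beta2)) / D in
  let c12 := (b1 * c1 * (d2 - beta2) - b2 * c2 * (d1 - beta1)
              + (a2 - a1) * (d1 - beta1) * (d2 - beta2)) / D in
  let d12 := (beta1 * b1 * (d2 - beta2) - beta2 * b2 * (d1 - beta1)) / D in
  (V1 :&: V2 == stacked_span (mx2 a12 b12 c12 d12))%MS.
Proof.
move=> [Hg1 HV1 b1n0 _ _] [Hg2 HV2 b2n0 _ _]; rewrite /orthogonal_g => /eqP Hort Hbeta HD /=.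
rewrite stackedE.
set S := flag_g _ _ _ _.
have SV1 : (S <= V1)%MS.
  by rewrite (eqmxP HV1); apply: sub_lemma => //; field; rewrite b1n0 HD.
have SV2 : (S <= V2)%MS.
  by rewrite (eqmxP HV2); apply: sub_lemma => //; field; rewrite b2n0 HD.
have rS : (2 <= \rank S)%N by apply: rank_g.
have rg1 : (2 <= \rank g1)%N by rewrite (eqmx_rank Hg1); apply: rank_g.
have rg2 : (2 <= \rank g2)%N by rewrite (eqmx_rank Hg2); apply: rank_g.
have rgs : \rank (g1 + g2)%MS = (\rank g1 + \rank g2)%N.
  by have := mxrank_sum_cap g1 g2; rewrite Hort mxrank0 addn0.
have g1V1 : (g1 <= V1)%MS by rewrite (eqmxP Hg1) (eqmxP HV1) g_sub_V.
have g2V2 : (g2 <= V2)%MS by rewrite (eqmxP Hg2) (eqmxP HV2) g_sub_V.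
have rVs : (4 <= \rank (V1 + V2)%MS)%N.
  apply: leq_trans (mxrankS (addsmxS g1V1 g2V2)).
  by rewrite rgs; apply: (leq_add rg1 rg2).
have rV1 : (\rank V1 <= 3)%N by rewrite (eqmx_rank HV1) rank_leq_row.
have rV2 : (\rank V2 <= 3)%N by rewrite (eqmx_rank HV2) rank_leq_row.
have rcap : (\rank (V1 :&: V2)%MS <= 2)%N.
  have E := mxrank_sum_cap V1 V2; have L := rank_leq_col (V1 + V2)%MS.
  move: E L rVs rV1 rV2.
  generalize (\rank (V1 + V2)%MS) (\rank (V1 :&: V2)%MS) (\rank V1) (\rank V2).
  clear; move=> p q r t; lia.
have SC : (S <= V1 :&: V2)%MS by rewrite sub_capmx SV1 SV2.
have Hc : (S == V1 :&: V2)%MS.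
  by rewrite -(mxrank_leqif_eq SC).2 eqn_leq (mxrankS SC) (leq_trans rcap rS).
by apply/eqmxP; apply: eqmx_sym; apply/eqmxP.
Qed.
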